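(* For every integer $N>1$, the number of self-complementary achiral necklaces on $2N$ beads is even.
   Context: Here a necklace on $2N$ beads is a circular arrangement of $2N$ beads, each colored with one of two colors, modulo cyclic rotation. It is achiral if it coincides (up to rotation) with its mirror reflection, and self-complementary if it coincides (up to rotation) with the necklace obtained by swapping the two colors. *)

(* Defs.v *)
From mathcomp Require Import all_boot.
Set Implicit Arguments. Unset Strict Implicit. Unset Printing Implicit Defensive.

Definition necklace (n : nat) (w : n.-tuple bool) : {set n.-tuple bool} :=
  [set rot_tuple k w | k : 'I_n].

Definition mirror (n : nat) (w : n.-tuple bool) : n.-tuple bool := rev_tuple w.
Definition complement (n : nat) (w : n.-tuple bool) : n.-tuple bool := map_tuple negb w.

Definition achiral (n : nat) (w : n.-tuple bool) : bool := mirror w \in necklace w.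
Definition selfcomp (n : nat) (w : n.-tuple bool) : bool := complement w \in necklace w.

Definition sc_achiral_necklaces (n : nat) : {set {set n.-tuple bool}} :=
  [set necklace w | w in [set w : n.-tuple bool | achiral w && selfcomp w]].

(* Main.v *)
Require Import Defs.
From mathcomp Require Import all_boot.
From mathcomp Require Import zify.
Set Implicit Arguments. Unset Strict Implicit. Unset Printing Implicit Defensive.

Lemma modP (n a b : nat) : a %% n = b %% n <-> exists p q, a + p * n = b + q * n.
Proof.
split.
- move=> H; exists (b %/ n), (a %/ n).
  have Ha := divn_eq a n; have Hb := divn_eq b n.
  move: Ha Hb H; set x := a %/ n * n; set y := b %/ n * n.
  lia.
- case=> p [q E]. by rewrite -(modnMDl p a) -(modnMDl q b) addnC E addnC.
Qed.

Section Gen.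
Variable n : nat.
Hypothesis n_gt0 : 0 < n.
Implicit Type f : nat -> bool.

Definition per f p := forall x, f (x + p) = f x.
Definition aper f p := forall x, f (x + p) = ~~ f x.
Definition sym f s := forall a b, (a + b) %% n = s %% n -> f a = f b.

Lemma per_mul f p k : per f p -> per f (k * p).
Proof. move=> H; elim: k => [|k IH] x; first by rewrite mul0n addn0.
by rewrite mulSn addnA IH H. Qed.

Lemma per_gcd f p q : 0 < p -> per f p -> per f q -> per f (gcdn p q).
Proof.
move=> p0 Hp Hq x; case: (Bezoutl q p0) => a _ /dvdnP [c E].
by rewrite -(per_mul a Hq) -addnA E (per_mul c Hp).
Qed.

Lemma per_mod f x : per f n -> f x = f (x %% n).
Proof. move=> H; by rewrite {1}(divn_eq x n) addnC (per_mul _ H). Qed.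

Lemma aper_per2 f p : aper f p -> per f (2 * p).
Proof. move=> H x; by rewrite mul2n -addnn addnA !H negbK. Qed.

Lemma per2_par f h c x : per f (2 * h) -> f (x + c * h) = f (x + odd c * h).
Proof.
move=> H; rewrite -{1}(odd_double_half c) mulnDl addnA.
have -> : c./2.*2 * h = c./2 * (2 * h) by rewrite mulnA [c./2 * 2]mulnC mul2n.
by rewrite (per_mul _ H).
Qed.

Lemma aper_odd f p c : aper f p -> odd c -> aper f (c * p).
Proof. move=> H oc x; by rewrite (per2_par _ _ (aper_per2 H)) oc mul1n H. Qed.

Lemma aper_not_per f p : aper f p -> per f p -> False.
Proof. move=> H1 H2; have := H1 0; rewrite H2; by case: (f 0). Qed.

End Gen.

Section Main.
Variable N : nat.
Hypothesis hN : 1 < N.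
Local Notation n := (2 * N).
Lemma n_gt0 : 0 < n. Proof. lia. Qed.
Implicit Type f : nat -> bool.

Lemma comp_help y : exists q, y + (n - y %% n) = q * n.
Proof.
exists (y %/ n).+1; have := divn_eq y n; have := ltn_pmod y n_gt0.
set r := y %% n; set u := y %/ n * n; lia.
Qed.

Lemma sym_shift2 f s t : per f n -> sym n f s -> sym n (fun x => f (x + t)) s ->
  per f (2 * t).
Proof.
move=> Pn Sf Sg x; set b := s + (n - (x + t) %% n).
have [q Hq] := comp_help (x + t).
have H1 : (x + t + b) %% n = s %% n by apply/modP; exists 0, q; lia.
have H2 : (b + t + x) %% n = s %% n by apply/modP; exists 0, q; lia.
rewrite mul2n -addnn addnA (Sg _ _ H1). exact: Sf.
Qed.

Lemma key f M s t : per f n -> 0 < M -> aper f M -> sym n f s ->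
  sym n (fun x => f (x + t)) s ->
  (forall x, f (x + t) = f x) \/ (forall x, f (x + t) = ~~ f x).
Proof.
move=> Pn M0 AM Sf Sg.
have P2t := sym_shift2 Pn Sf Sg.
have P2M := aper_per2 AM.
have := per_gcd (_ : 0 < 2 * M) P2M P2t; rewrite -muln_gcdr => /(_ ltac:(lia)) Ph.
set h := gcdn M t in Ph.
have hM : M = M %/ h * h by rewrite divnK // dvdn_gcdl.
have ht : t = t %/ h * h by rewrite divnK // dvdn_gcdr.
case oM: (odd (M %/ h)).
- have Ah : aper f h.
    move=> x; rewrite -(AM x) hM (per2_par _ _ Ph) oM mul1n //.
  case ot: (odd (t %/ h)); [right|left] => x; rewrite ht (per2_par _ _ Ph) ot.
    by rewrite mul1n Ah.
  by rewrite mul0n addn0.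
- exfalso; apply: (aper_not_per AM) => x.
  by rewrite hM (per2_par _ _ Ph) oM mul0n addn0.
Qed.

Lemma aper_h f k : per f n -> aper f k -> exists h, (h %| N) /\ aper f h.
Proof.
move=> Pn Ak; have P2k := aper_per2 Ak.
have := per_gcd (_ : 0 < 2 * N) Pn P2k; rewrite -muln_gcdr => /(_ ltac:(lia)) Ph.
set h := gcdn N k in Ph.
have hk : k = k %/ h * h by rewrite divnK // dvdn_gcdr.
exists h; split; first exact: dvdn_gcdl.
case ok: (odd (k %/ h)).
- move=> x; by rewrite -(Ak x) hk (per2_par _ _ Ph) ok mul1n.
- exfalso; apply: (aper_not_per Ak) => x.
  by rewrite hk (per2_par _ _ Ph) ok mul0n addn0.
Qed.

Lemma aper_lev f h : h %| N -> aper f h ->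
  exists i, [/\ i < N.+1, 2 ^ i %| N & aper f (N %/ 2 ^ i)].
Proof.
move=> hN' Ah.
have h0 : 0 < h.
  rewrite lt0n; apply/negP => /eqP h0; move: hN'; rewrite h0 dvd0n; lia.
have c0 : 0 < N %/ h by rewrite divn_gt0 // dvdn_leq //; lia.
have [m cm Ec] := pfactor_coprime (isT : prime 2) c0.
set i := logn 2 (N %/ h) in Ec.
have EN : N = m * h * 2 ^ i by rewrite mulnAC -Ec divnK.
have d2 : 2 ^ i %| N by rewrite EN dvdn_mull.
exists i; split => //.
- have := dvdn_leq (ltnW hN) d2; have := ltn_expl i (isT : 1 < 2); lia.
- rewrite {1}EN mulnK ?expn_gt0 //; apply: aper_odd => //.
  by rewrite -coprimen2 coprime_sym.
Qed.

Lemma lev_lt f i j : i < j -> 2 ^ j %| N ->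
  aper f (N %/ 2 ^ i) -> aper f (N %/ 2 ^ j) -> False.
Proof.
move=> ij dj Ai Aj.
have [d Ej] : exists d, j = i + d.+1 by exists (j - i.+1); lia.
have EN : N = N %/ 2 ^ j * 2 ^ j by rewrite divnK.
have E : N %/ 2 ^ i = 2 ^ d * (2 * (N %/ 2 ^ j)).
  move: EN; set M := N %/ 2 ^ j => EN.
  rewrite EN Ej expnD mulnA mulnAC mulnK ?expn_gt0 // expnS.
  lia.
rewrite E in Ai.
exact: (aper_not_per Ai (per_mul _ (aper_per2 Aj))).
Qed.

Lemma lev_uniq f i j : 2 ^ i %| N -> 2 ^ j %| N ->
  aper f (N %/ 2 ^ i) -> aper f (N %/ 2 ^ j) -> i = j.
Proof.
move=> di dj Ai Aj; case: (ltngtP i j) => // ij.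
- by case: (lev_lt ij dj Ai Aj).
- by case: (lev_lt ij di Aj Ai).
Qed.

Lemma nth_rot_gen (T : Type) (x0 : T) (s : seq T) k i : k <= size s -> i < size s ->
  nth x0 (rot k s) i = nth x0 s ((i + k) %% size s).
Proof.
move=> ks iS; rewrite /rot nth_cat size_drop.
case: ltnP => h.
- rewrite nth_drop modn_small; [by rewrite addnC | lia].
- rewrite nth_take; last by lia.
  have -> : i + k = (i - (size s - k)) + size s by lia.
  rewrite modnDr modn_small //. lia.
Qed.

Definition F (w : n.-tuple bool) x := nth false w (x %% n).

Lemma F_per w : per (F w) n.
Proof. by move=> x; rewrite /F modnDr. Qed.

Lemma F_mod w x : F w (x %% n) = F w x.
Proof. by rewrite /F modn_mod. Qed.

Lemma tuple_ext (w v : n.-tuple bool) : (forall x, F w x = F v x) -> w = v.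
Proof.
move=> H; apply: val_inj; apply: (@eq_from_nth _ false); first by rewrite !size_tuple.
move=> i; rewrite size_tuple => hi; have := H i; by rewrite /F modn_small.
Qed.

Lemma F_rot (w : n.-tuple bool) (k : nat) x : k < n -> F (rot_tuple k w) x = F w (x + k).
Proof.
move=> hk; rewrite /F /= nth_rot_gen ?size_tuple ?ltn_pmod ?n_gt0 //; last by lia.
by rewrite modnDml.
Qed.

Lemma F_comp (w : n.-tuple bool) x : F (complement w) x = ~~ F w x.
Proof. by rewrite /F /= (nth_map false) // size_tuple ltn_pmod ?n_gt0. Qed.

Lemma F_mirror (w : n.-tuple bool) x : F (mirror w) x = F w (n - (x %% n).+1).
Proof.
rewrite /F /= nth_rev size_tuple ?ltn_pmod ?n_gt0 // [(n - _) %% n]modn_small //.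
have := ltn_pmod x n_gt0; set r := x %% n; lia.
Qed.

Lemma neck_char (v w : n.-tuple bool) :
  v \in necklace w <-> exists k, k < n /\ forall x, F v x = F w (x + k).
Proof.
split.
- case/imsetP => k _ ->; exists k; split => // x; exact: F_rot.
- case=> k [hk H]; apply/imsetP; exists (Ordinal hk) => //.
  by apply: tuple_ext => x; rewrite F_rot.
Qed.

Lemma neck_mem (v w : n.-tuple bool) k :
  (forall x, F v x = F w (x + k)) -> v \in necklace w.
Proof.
move=> H; apply/neck_char; exists (k %% n); split; first by rewrite ltn_pmod ?n_gt0.
by move=> x; rewrite H /F modnDmr.
Qed.

Lemma neck_eq (v w : n.-tuple bool) : v \in necklace w -> necklace v = necklace w.
Proof.
case/neck_char => k [hk H]; apply/setP => u; apply/idP/idP.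
- case/neck_char => j [_ Hj]; apply: (neck_mem (k := j + k)) => x.
  by rewrite Hj H addnA.
- case/neck_char => j [_ Hj]; apply: (neck_mem (k := j + (n - k))) => x.
  rewrite Hj H; have -> : x + (j + (n - k)) + k = (x + j) + n by lia.
  by rewrite F_per.
Qed.

Lemma F_congr (w : n.-tuple bool) y y' : y %% n = y' %% n -> F w y = F w y'.
Proof. by rewrite /F => ->. Qed.

Definition aperb (w : n.-tuple bool) M := [forall x : 'I_n, F w (x + M) == ~~ F w x].
Definition symb (w : n.-tuple bool) s :=
  [forall x : 'I_n, forall y : 'I_n, ((x + y) %% n == s %% n) ==> (F w x == F w y)].

Lemma aperbP w M : reflect (aper (F w) M) (aperb w M).
Proof.
apply: (iffP forallP) => H x.
- have /eqP := H (Ordinal (ltn_pmod x n_gt0)); rewrite /= F_mod => <-.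
  by rewrite /F modnDml.
- by rewrite H.
Qed.

Lemma symbP w s : reflect (sym n (F w) s) (symb w s).
Proof.
apply: (iffP forallP) => H.
- move=> a b E; have := H (Ordinal (ltn_pmod a n_gt0)).
  move/forallP => /(_ (Ordinal (ltn_pmod b n_gt0))) /implyP /=.
  by rewrite modnDm E eqxx !F_mod => /(_ isT) /eqP.
- move=> x; apply/forallP => y; apply/implyP => /eqP E; apply/eqP; exact: H.
Qed.

Definition s0 M := if odd M then 0 else 1.
Definition goodM w M := [&& aperb w M, symb w (s0 M) & ~~ F w 0].
Definition isLevel M := [exists i : 'I_N.+1, (2 ^ i %| N) && (M == N %/ 2 ^ i)].
Definition Tp := [set w : n.-tuple bool | [exists M : 'I_N.+1, isLevel M && goodM w M]].

Lemma isLevelP M :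
  reflect (exists i, [/\ i < N.+1, 2 ^ i %| N & M = N %/ 2 ^ i]) (isLevel M).
Proof.
apply: (iffP existsP).
- by case=> i /andP [d /eqP E]; exists i.
- by case=> i [hi d E]; exists (Ordinal hi); rewrite /= d E eqxx.
Qed.

Lemma level_pos M : isLevel M -> [/\ 0 < M, M <= N & M %| N].
Proof.
case/isLevelP => i [_ d ->]; split; last exact: dvdn_div.
- by rewrite divn_gt0 ?expn_gt0 // dvdn_leq //; lia.
- exact: leq_div.
Qed.

Lemma level_uniq f M1 M2 : isLevel M1 -> isLevel M2 -> aper f M1 -> aper f M2 ->
  M1 = M2.
Proof.
case/isLevelP => i [_ di ->]; case/isLevelP => j [_ dj ->] A1 A2.
by rewrite (lev_uniq di dj A1 A2).
Qed.

Lemma shift_aper f k M : per f n -> k <= n -> aper (fun x => f (x + k)) M -> aper f M.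
Proof.
move=> Pn kn A y.
have E1 : y + M + n = (y + n - k) + M + k by lia.
have E2 : y + n = (y + n - k) + k by lia.
by rewrite -(Pn (y + M)) E1 A -E2 Pn.
Qed.

Lemma Tp_X w : w \in Tp -> achiral w && selfcomp w.
Proof.
rewrite inE => /existsP [M /andP [LM /and3P [/aperbP A /symbP S _]]].
apply/andP; split.
- apply: (neck_mem (k := s0 M + 1)) => x; rewrite F_mirror; apply: S.
  apply/modP; exists 0, (x %/ n).+1.
  have := divn_eq x n; have := ltn_pmod x n_gt0.
  set r := x %% n; set q := x %/ n; lia.
- apply: (neck_mem (k := M)) => x; by rewrite F_comp A.
Qed.

Lemma achiral_sym w : achiral w -> exists s, sym n (F w) s.
Proof.
case/neck_char => k [hk H]; exists (k + n - 1) => a b E.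
have [p [q Epq]] := (modP _ _ _).1 E.
set x := a + (n - k).
have -> : F w a = F w (x + k) by rewrite -(F_per w a) /x; congr (F w _); lia.
rewrite -H F_mirror; apply: F_congr; apply/modP.
exists q.+1, (p + x %/ n).
have := divn_eq x n; have := ltn_pmod x n_gt0.
move: Epq; rewrite /x; set r := (a + (n - k)) %% n; set X := (a + (n - k)) %/ n.
lia.
Qed.

Lemma sym_parity f s M : per f n -> aper f M -> M <= n -> sym n f s -> odd (s + M).
Proof.
move=> Pn A Mn S; apply/negP => /negP ev.
set c := (s + M)./2.
have E : c + (c + n - M) = s + n by rewrite /c; move: ev; lia.
have := S c (c + n - M); rewrite E modnDr => /(_ erefl).
have := A (c + n - M); have -> : c + n - M + M = c + n by lia.
rewrite Pn => ->; by case: (f _).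
Qed.

Lemma X_Tp w : achiral w -> selfcomp w -> exists v, v \in Tp /\ v \in necklace w.
Proof.
move=> ach /neck_char [k [hk Hk]].
have Ak : aper (F w) k by move=> x; rewrite -Hk F_comp.
have [h [dh Ah]] := aper_h (F_per w) Ak.
have [i [hi di AM]] := aper_lev dh Ah.
set M := N %/ 2 ^ i in AM.
have LM : isLevel M by apply/isLevelP; exists i.
have [M0 MN _] := level_pos LM.
have [s S] := achiral_sym ach.
have ps := sym_parity (F_per w) AM (ltac:(lia) : M <= n) S.
set t := (s - s0 M)./2.
have Et : s0 M + 2 * t = s by rewrite /t /s0; case oM: (odd M); move: ps oM; lia.
have Sg : sym n (fun x => F w (x + t)) (s0 M).
  move=> a b E; apply: S; have [p [q Epq]] := (modP _ _ _).1 E.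
  apply/modP; exists p, q; lia.
set t' := if F w t then t + M else t.
exists (rot_tuple (t' %% n) w).
have Fv : forall x, F (rot_tuple (t' %% n) w) x = F w (x + t').
  by move=> x; rewrite F_rot ?ltn_pmod ?n_gt0 // /F modnDmr.
split; last by apply: (neck_mem (k := t')) => x; rewrite Fv.
rewrite inE; apply/existsP; exists (Ordinal (MN : M < N.+1)) => /=.
rewrite LM /goodM /=; apply/and3P; split.
- apply/aperbP => x; rewrite !Fv -addnAC; exact: AM.
- apply/symbP => a b E; rewrite !Fv /t'; case: (F w t); last exact: Sg.
  by rewrite !addnA !AM (Sg _ _ E).
- rewrite Fv add0n /t'; case e: (F w t); last by rewrite e.
  by rewrite AM e.
Qed.

Lemma Tp_inj w v : w \in Tp -> v \in Tp -> v \in necklace w -> v = w.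
Proof.
rewrite !inE => /existsP [M1 /andP [L1 /and3P [/aperbP A1 /symbP S1 w0]]].
move=> /existsP [M2 /andP [L2 /and3P [/aperbP A2 /symbP S2 v0]]].
case/neck_char => k [hk Hk].
have A2' : aper (F w) M2.
  apply: (shift_aper (k := k)) (F_per w) (ltnW hk) _ => x; rewrite -!Hk; exact: A2.
have E := level_uniq L1 L2 A1 A2'.
have [M0 _ _] := level_pos L1.
have Sg : sym n (fun x => F w (x + k)) (s0 M1).
  move=> a b H; rewrite -!Hk; apply: S2; by rewrite -E.
case: (key (F_per w) M0 A1 S1 Sg) => H.
- by apply: tuple_ext => x; rewrite Hk H.
- by move: v0; rewrite Hk H (negPf w0).
Qed.

Lemma S_eq : sc_achiral_necklaces n = (@necklace n) @: Tp.
Proof.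
apply/setP => c; apply/imsetP/imsetP.
- case=> w; rewrite inE => /andP [a sc] ->.
  have [v [vT vN]] := X_Tp a sc; exists v => //; exact/esym/neck_eq.
- case=> w hw ->; exists w => //; rewrite inE; exact: Tp_X.
Qed.

Lemma neck_self (w : n.-tuple bool) : w \in necklace w.
Proof. by apply: (neck_mem (k := 0)) => x; rewrite addn0. Qed.

Lemma card_S : #|sc_achiral_necklaces n| = #|Tp|.
Proof.
rewrite S_eq card_in_imset // => w v hw hv E.
apply/esym/(Tp_inj hw hv); rewrite E; exact: neck_self.
Qed.

Lemma size_mk (f : nat -> bool) : size (mkseq f n) == n.
Proof. by rewrite size_mkseq. Qed.
Definition mkt f : n.-tuple bool := Tuple (size_mk f).
Lemma F_mkt f x : F (mkt f) x = f (x %% n).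
Proof. by rewrite /F /= nth_mkseq // ltn_pmod // n_gt0. Qed.

Definition p1 := mkt odd.
Definition p2 := mkt (fun i => odd i./2).

Lemma F_p1 x : F p1 x = odd x.
Proof. by rewrite F_mkt odd_mod // oddM. Qed.

Lemma F_p2 x : ~~ odd N -> F p2 x = odd x./2.
Proof.
move=> ev; rewrite F_mkt.
have := divn_eq x n; have := ltn_pmod x n_gt0.
set r := x %% n; set q := x %/ n; move: ev; lia.
Qed.

Lemma good1 w : goodM w 1 -> w = p1.
Proof.
case/and3P => /aperbP A _ w0; apply: tuple_ext => x; rewrite F_p1.
elim: x => [|x IH]; first by rewrite (negPf w0).
by rewrite -addn1 A IH addn1 /=.
Qed.

Lemma lev2_even : isLevel 2 -> ~~ odd N.
Proof.
case/level_pos => _ _ /dvdnP [c ->]; by rewrite oddM andbF.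
Qed.

Lemma good2 w : isLevel 2 -> goodM w 2 -> w = p2.
Proof.
move=> L; case/and3P => /aperbP A /symbP S w0; apply: tuple_ext => x.
rewrite F_p2 ?lev2_even //.
have H0 : F w 0 = false by apply/negbTE.
have H1 : F w 1 = false by rewrite -H0; apply: S.
suff : F w x = odd x./2 /\ F w x.+1 = odd x.+1./2 by case.
elim: x => [|x [IH1 IH2]]; first by rewrite H0 H1.
split => //; rewrite -addn2 A IH1.
have -> : (x + 2)./2 = (x./2).+1 by lia.
by [].
Qed.

Lemma lev12 : isLevel 1 -> isLevel 2.
Proof.
case/isLevelP => i [hi di E].
have EN : N = 2 ^ i by rewrite -(divnK di) -E mul1n.
case: i hi di E EN => [|j] hi di E EN; first by move: hN; rewrite EN.
apply/isLevelP; exists j; split.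
- lia.
- by rewrite EN expnS dvdn_mull.
- by rewrite EN expnS mulnK ?expn_gt0.
Qed.

Lemma lev21 : isLevel 2 -> isLevel 1.
Proof.
case/isLevelP => i [hi di E].
have EN : N = 2 ^ i.+1 by rewrite -(divnK di) -E expnS.
apply/isLevelP; exists i.+1; split.
- have := ltn_expl i.+1 (isT : 1 < 2); lia.
- by rewrite EN.
- by rewrite EN divnn expn_gt0.
Qed.

Lemma p1good : goodM p1 1.
Proof.
apply/and3P; split.
- by apply/aperbP => x; rewrite !F_p1 addn1.
- apply/symbP => a b E; rewrite !F_p1; have [p [q Epq]] := (modP _ _ _).1 E.
  move: Epq; rewrite /s0 /=. lia.
- by rewrite F_p1.
Qed.

Lemma p2good : isLevel 2 -> goodM p2 2.
Proof.
move=> L; have ev := lev2_even L.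
apply/and3P; split.
- by apply/aperbP => x; rewrite !F_p2 //; lia.
- apply/symbP => a b E; rewrite !F_p2 //; have [p [q Epq]] := (modP _ _ _).1 E.
  have [K EK] : exists K, N = 2 * K by exists N./2; move: ev; lia.
  move: Epq; rewrite /s0 /= EK; lia.
- by rewrite F_p2.
Qed.

Definition Ind M y := (y %% M == 2) || (y %% M == M + s0 M - 2).
Definition flipt M (w : n.-tuple bool) := mkt (fun i => F w i (+) Ind M i).

Lemma F_flip M w x : M %| n -> F (flipt M w) x = F w x (+) Ind M x.
Proof. by move=> d; rewrite F_mkt F_mod /Ind !(modn_dvdm _ d). Qed.

Lemma flipK M w : M %| n -> flipt M (flipt M w) = w.
Proof.
by move=> d; apply: tuple_ext => x; rewrite !F_flip // -addbA addbb addbF.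
Qed.

Lemma dvd_n M : isLevel M -> M %| n.
Proof. by case/level_pos => _ _ d; apply: dvdn_trans d (dvdn_mull _ _). Qed.

Lemma ind_sym M z x y : 3 <= M -> z <= 1 -> x < M -> y < M -> (x + y) %% M = z ->
  ((x == 2) || (x == M + z - 2)) = ((y == 2) || (y == M + z - 2)).
Proof.
move=> M3 z1 hx hy; case: (ltnP (x + y) M) => h.
- rewrite modn_small // => E.
  by do 4! case: eqP => ?; lia.
- rewrite -(subnK h) modnDr modn_small; last by lia.
  by move=> E; do 4! case: eqP => ?; lia.
Qed.

Lemma flip_good M w : isLevel M -> 3 <= M -> goodM w M -> goodM (flipt M w) M.
Proof.
move=> L M3; have d := dvd_n L; have [M0 _ _] := level_pos L.
case/and3P => /aperbP A /symbP S w0; apply/and3P; split.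
- apply/aperbP => x; rewrite !F_flip // A /Ind modnDr; by case: (F w x); case: (_ || _).
- apply/symbP => a b E; rewrite !F_flip // (S _ _ E); congr (_ (+) _).
  have E' : (a + b) %% M = s0 M.
    rewrite -(modn_dvdm _ d) E (modn_dvdm _ d) modn_small //.
    by rewrite /s0; case: (odd M); lia.
  have ha := ltn_pmod a M0; have hb := ltn_pmod b M0.
  move: E'; rewrite /Ind -modnDm; apply: ind_sym => //.
  by rewrite /s0; case: (odd M).
- rewrite F_flip // /Ind mod0n (negPf w0) /=; apply/eqP; rewrite /s0; case: (odd M); lia.
Qed.

Lemma flip_neq M w : isLevel M -> 3 <= M -> flipt M w != w.
Proof.
move=> L M3; apply/negP => /eqP E.
have := F_flip w 2 (dvd_n L); rewrite E /Ind modn_small // eqxx /=.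
by case: (F w 2).
Qed.

Definition levM w := if [pick M : 'I_N.+1 | isLevel M && goodM w M] is Some M
  then val M else 0.

Lemma levM_spec w M : isLevel M -> goodM w M -> levM w = M.
Proof.
move=> L G; rewrite /levM; case: pickP => [M' /andP [L' G'] | H].
- case/and3P: G => /aperbP A _ _; case/and3P: G' => /aperbP A' _ _.
  exact: level_uniq L' L A' A.
- have [_ MN _] := level_pos L.
  by have := H (Ordinal (MN : M < N.+1)); rewrite /= L G.
Qed.

Lemma mem_Tp w M : isLevel M -> goodM w M -> w \in Tp.
Proof.
move=> L G; have [_ MN _] := level_pos L; rewrite inE; apply/existsP.
by exists (Ordinal (MN : M < N.+1)); rewrite /= L G.
Qed.

Definition psi w := if levM w == 1 then p2 else if levM w == 2 then p1
  else flipt (levM w) w.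

Lemma psi_prop w : w \in Tp -> [/\ psi w \in Tp, psi (psi w) = w & psi w != w].
Proof.
rewrite inE => /existsP [M /andP [L G]].
have lw := levM_spec L G; rewrite /psi lw.
have [M0 _ _] := level_pos L.
have p12 : p2 != p1.
  apply/negP => /eqP E; have := F_p1 1; rewrite -E F_mkt modn_small //; lia.
case: eqP => [M1 | M1]; last case: eqP => [M2 | M2].
- rewrite M1 in L G; have L2 := lev12 L; have G2 := p2good L2.
  rewrite (levM_spec L2 G2) /= (good1 G); split => //.
  exact: mem_Tp L2 G2.
- rewrite M2 in L G; have L1 := lev21 L; have G1 := p1good.
  rewrite (levM_spec L1 G1) /= (good2 L G); split => //; last by rewrite eq_sym.
  exact: mem_Tp L1 G1.
- have M3 : 3 <= M by move: M1 M2 M0; lia.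
  have G' := flip_good L M3 G.
  rewrite (levM_spec L G') (introF eqP M1) (introF eqP M2).
  split; [exact: mem_Tp L G' | exact: flipK (dvd_n L) | exact: flip_neq L M3].
Qed.

End Main.


Lemma inv_even (T : finType) (A : {set T}) (g : T -> T) :
  {in A, forall x, g x \in A} -> {in A, forall x, g (g x) = x} ->
  {in A, forall x, g x != x} -> ~~ odd #|A|.
Proof.
have [k Hk] : exists k, #|A| <= k by exists #|A|.
elim: k A Hk => [|k IH] A Hk Hin Hinv Hneq.
  by move: Hk; rewrite leqn0 => /eqP ->.
case: (set_0Vmem A) => [-> | [x xA]]; first by rewrite cards0.
have gxA : g x \in A :\ x by rewrite !inE Hneq ?Hin.
set A' := A :\ x :\ g x.
have EA : #|A| = #|A'|.+2.
  by rewrite (cardsD1 x A) xA (cardsD1 (g x) (A :\ x)) gxA.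
have H' : forall y, y \in A' -> [/\ y \in A, y != x & y != g x].
  by move=> y; rewrite !inE => /and3P [a b c].
rewrite EA /= negbK; apply: IH.
- move: Hk; rewrite EA; lia.
- move=> y /H' [yA yx ygx]; rewrite !inE Hin // andbT.
  apply/andP; split; apply/eqP => E.
  + by move/eqP: yx; apply; rewrite -(Hinv y yA) E Hinv.
  + by move/eqP: ygx; apply; rewrite -(Hinv y yA) E.
- by move=> y /H' [yA _ _]; apply: Hinv.
- by move=> y /H' [yA _ _]; apply: Hneq.
Qed.

Theorem lemma2p3 (N : nat) (hN : 1 < N) :
  ~~ odd #|sc_achiral_necklaces (2 * N)|.
Proof.
rewrite (card_S hN).
have := @inv_even _ (Tp N) (@psi N).
apply.
- by move=> w hw; case: (psi_prop hN hw).
- by move=> w hw; case: (psi_prop hN hw).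
- by move=> w hw; case: (psi_prop hN hw).
Qed.
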